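(* Let $\mathcal H$ be a separable Hilbert space, $(X,\mathcal M,\mu)$ a measure space, and $\{\phi_t\}_{t\in X}$ a continuous Bessel family over $X$ in $\mathcal H$. Then there exist a $\sigma$-finite subset $X'\subset X$ and a $\sigma$-algebra $\mathcal M'\subset\{E\cap X':E\in\mathcal M\}$ such that: (i) $\phi_t=0$ for all $t\in X\setminus X'$; (ii) the restriction $\{\phi_t\}_{t\in X'}$ is a continuous Bessel family over $(X',\mathcal M',\mu)$; (iii) the measure algebra of $(X',\mathcal M',\mu)$ is separable.
   Context: A family $\{\phi_t\}_{t\in X}$ of vectors in $\mathcal H$ is a continuous Bessel family (with bound $B$) over the measure space $(X,\mu)$ if (i) for each $f\in\mathcal H$ the function $t\mapsto\langle f,\phi_t\rangle$ is measurable, and (ii) there is $B<\infty$ with $\int_X|\langle f,\phi_t\rangle|^2\,d\mu(t)\le B\|f\|^2$ for all $f\in\mathcal H$. The measure algebra of a measure space $(X,\mathcal N,\mu)$ consists of equivalence classes of sets in $\mathcal N$ under $E\sim F\iff\mu(E\triangle F)=0$; it is called separable if the set of (classes of) sets of finite measure with the metric $\rho(E,F)=\mu(E\triangle F)$ is a separable metric space. *)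

(* Defs.v *)
From HB Require Import structures.
From mathcomp Require Import all_boot all_order all_algebra.
From mathcomp Require Import all_classical all_reals all_analysis.
From mathcomp Require Import complex.
Set Implicit Arguments. Unset Strict Implicit. Unset Printing Implicit Defensive.
Import Order.TTheory GRing.Theory Num.Theory.
Local Open Scope classical_set_scope.
Local Open Scope ring_scope.

Record hilbert (R : realType) (H : lmodType R[i]) := Hilbert {
  ip : H -> H -> R[i];
  ip_linl : forall (a : R[i]) (x y z : H), ip (a *: x + y) z = a * ip x z + ip y z;
  ip_conj : forall x y : H, ip y x = (ip x y)^*;
  ip_ge0 : forall x : H, 0 <= ip x x;
  ip_eq0 : forall x : H, ip x x = 0 -> x = 0 }.

Definition hnorm (R : realType) (H : lmodType R[i]) (hs : hilbert H) (x : H) : R :=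
  Num.sqrt (complex.Re (ip hs x x)).

Definition hcomplete (R : realType) (H : lmodType R[i]) (hs : hilbert H) :=
  forall u : nat -> H,
    (forall e : R, 0 < e -> exists N, forall m n, (N <= m)%N -> (N <= n)%N ->
        hnorm hs (u m - u n) < e) ->
    exists l : H, forall e : R, 0 < e -> exists N, forall n, (N <= n)%N ->
        hnorm hs (u n - l) < e.

Definition hseparable (R : realType) (H : lmodType R[i]) (hs : hilbert H) :=
  exists D : set H, countable D /\
    forall (x : H) (e : R), 0 < e -> exists2 y, D y & hnorm hs (x - y) < e.

(* measurability of a complex-valued function on the domain D with respect
   to the sigma-algebra G (of subsets of D): real and imaginary parts are
   measurable (Borel sigma-algebra of C = R^2) *)
Definition cmeasurable_in (R : realType) (T : Type) (D : set T)
    (G : set (set T)) (g : T -> R[i]) :=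
  forall B : set R, measurable B ->
    G (D `&` (fun t => complex.Re (g t)) @^-1` B) /\
    G (D `&` (fun t => complex.Im (g t)) @^-1` B).

Definition cont_bessel (R : realType) (H : lmodType R[i]) (hs : hilbert H)
    (d : measure_display) (X : measurableType d) (mu : {measure set X -> \bar R})
    (D : set X) (G : set (set X)) (phi : X -> H) :=
  (forall f : H, cmeasurable_in D G (fun t => ip hs f (phi t))) /\
  exists B : R, forall f : H,
    (\int[mu]_(t in D) ((Normc.normc (ip hs f (phi t))) ^+ 2)%:E
      <= (B * hnorm hs f ^+ 2)%:E)%E.

Definition sigma_finite_subset (R : realType) (d : measure_display)
    (X : measurableType d) (mu : {measure set X -> \bar R}) (X' : set X) :=
  exists F : nat -> set X, (forall n, measurable (F n)) /\
    (forall n, (mu (F n) < +oo)%E) /\ X' = \bigcup_n F n.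

(* separability of the measure algebra of (_, G, mu): the sets of G of finite
   measure, with the (pseudo)metric mu(E symdiff F), form a separable space *)
Definition meas_alg_separable (R : realType) (d : measure_display)
    (X : measurableType d) (mu : {measure set X -> \bar R}) (G : set (set X)) :=
  exists S : set (set X), countable S /\
    (forall F, S F -> G F /\ (mu F < +oo)%E) /\
    forall E, G E -> (mu E < +oo)%E -> forall e : R, 0 < e ->
      exists2 F, S F & (mu ((E `\` F) `|` (F `\` E)) < e%:E)%E.

(* Main.v *)
Require Import Defs.
From HB Require Import structures.
From mathcomp Require Import all_boot all_order all_algebra.
From mathcomp Require Import all_classical all_reals all_analysis.
From mathcomp Require Import complex.
From mathcomp Require Import ring lra.
From mathcomp Require Import measurable_realfun.
Set Implicit Arguments. Unset Strict Implicit. Unset Printing Implicit Defensive.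
Import Order.TTheory GRing.Theory Num.Theory.
Import numFieldNormedType.Exports.
Local Open Scope classical_set_scope.
Local Open Scope ring_scope.



Section Pre.
Local Open Scope complex_scope.

Lemma conjRe (R : realType) (z : R[i]) : complex.Re (z^*) = complex.Re z.
Proof. by case: z. Qed.
Lemma conjIm (R : realType) (z : R[i]) : complex.Im (z^*) = - complex.Im z.
Proof. by case: z. Qed.

End Pre.
Section IP.
Local Open Scope complex_scope.
Context (R : realType) (H : lmodType R[i]) (hs : hilbert H).
Local Notation ip := (ip hs).

Lemma ip0l z : ip 0 z = 0.
Proof.
have := ip_linl hs 1 0 0 z. rewrite scale1r addr0 mul1r.
by move/(congr1 (fun w => w - ip 0 z)); rewrite addrK subrr.
Qed.

Lemma ipDl x y z : ip (x + y) z = ip x z + ip y z.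
Proof. by rewrite -[x]scale1r ip_linl mul1r scale1r. Qed.

Lemma ipZl a x z : ip (a *: x) z = a * ip x z.
Proof. by rewrite -[a *: x]addr0 ip_linl ip0l addr0. Qed.

Lemma ipNl x z : ip (- x) z = - ip x z.
Proof. by rewrite -scaleN1r ipZl mulN1r. Qed.

Lemma ipBl x y z : ip (x - y) z = ip x z - ip y z.
Proof. by rewrite ipDl ipNl. Qed.

Lemma ipBr x y z : ip z (x - y) = ip z x - ip z y.
Proof. rewrite ip_conj ipBl rmorphB; by congr (_ - _); rewrite [RHS]ip_conj. Qed.

Lemma ip0r z : ip z 0 = 0.
Proof. by rewrite ip_conj ip0l conjC0. Qed.

Lemma ReipC x y : complex.Re (ip y x) = complex.Re (ip x y).
Proof. by rewrite ip_conj conjRe. Qed.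

Lemma Imipxx x : complex.Im (ip x x) = 0.
Proof. exact: ger0_Im (ip_ge0 hs x). Qed.

Lemma Reipxx_ge0 x : 0 <= complex.Re (ip x x).
Proof. by have := ip_ge0 hs x; rewrite lecE => /andP[]. Qed.

Lemma Reipxx0 x : complex.Re (ip x x) = 0 -> x = 0.
Proof.
move=> h; apply: (@ip_eq0 _ _ hs x); apply/eqP; rewrite eq_complex /= h Imipxx.
by rewrite !eqxx.
Qed.

Lemma hnorm_sq x : hnorm hs x ^+ 2 = complex.Re (ip x x).
Proof. by rewrite /hnorm sqr_sqrtr // Reipxx_ge0. Qed.

Lemma hnorm_ge0 x : 0 <= hnorm hs x.
Proof. exact: sqrtr_ge0. Qed.


Lemma ReMc (s : R) (z : R[i]) : complex.Re (s%:C * z) = s * complex.Re z.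
Proof. by case: z => a b /=; rewrite mul0r subr0. Qed.

Lemma quad_ge0 (s : R) x y :
  0 <= s ^+ 2 * complex.Re (ip x x) - 2 * s * complex.Re (ip x y)
       + complex.Re (ip y y).
Proof.
have h := Reipxx_ge0 (s%:C *: x - y).
rewrite ipBl !ipBr !ipZl !raddfB /= in h.
rewrite [ip x (s%:C *: x)]ip_conj [ip y (s%:C *: x)]ip_conj !ipZl in h.
move: h; case: (ip x x) => a b; case: (ip x y) => c e; case: (ip y y) => f g /=.
move=> h; nra.
Qed.


Lemma ReCS x y : `|complex.Re (ip x y)| <= hnorm hs x * hnorm hs y.
Proof.
have [x0|xn0] := eqVneq x 0.
  by rewrite x0 ip0l normr0 mulr_ge0 // hnorm_ge0.
have Nx0 : 0 < complex.Re (ip x x).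
  rewrite lt_neqAle Reipxx_ge0 andbT eq_sym; apply/eqP => /Reipxx0 /eqP.
  by rewrite (negbTE xn0).
set Nx := complex.Re (ip x x) in Nx0 *.
set r := complex.Re (ip x y).
set Ny := complex.Re (ip y y).
have := quad_ge0 (r / Nx) x y; rewrite -/Nx -/r -/Ny.
set t := r / Nx => h.
have ht : t * Nx = r by rewrite /t mulfVK // gt_eqF.
have hNy : 0 <= Ny := Reipxx_ge0 y.
have key : r ^+ 2 <= Nx * Ny by nra.
rewrite -ler_sqr ?nnegrE ?mulr_ge0 ?hnorm_ge0 // exprMn !hnorm_sq.
by rewrite real_normK // num_real.
Qed.

End IP.

Definition gen d (X : measurableType d) (R : realType) (h : nat -> X -> R) :
  set (set X) := [set [set t | h p.1 t < ratr p.2] | p in [set: nat * rat]].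

Lemma gen_lt d (X : measurableType d) (R : realType) (h : nat -> X -> R) n x :
  <<s gen h >> [set t | h n t < x].
Proof.
pose A k : set X := match @choice.unpickle (rat) k with
  | Some q => if ratr q < x then [set t | h n t < ratr q] else set0
  | None => set0 end.
have -> : [set t | h n t < x] = \bigcup_k A k.
  apply/seteqP; split => [t /= ht|t [k _]].
    have [q] := rat_in_itvoo ht; rewrite in_itv /= => /andP[q1 q2].
    exists (choice.pickle q); first exact: I.
    by rewrite /A choice.pickleK q2; exact: q1.
  rewrite /A; case: (choice.unpickle k) => [q|]; last by [].
  by case: ifP => // qx /= /lt_trans; apply.
case: (@smallest_sigma_algebra _ setT (gen h)) => _ _; apply => k.
rewrite /A; case: (choice.unpickle k) => [q|]; last exact: sigma_algebra0.
case: ifP => _; last exact: sigma_algebra0.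
by apply: sub_sigma_algebra; exists (n, q).
Qed.

Lemma gen_mfun d (X : measurableType d) (R : realType) (h : nat -> X -> R) n :
  measurable_fun [set: g_sigma_algebraType (gen h)] (h n : g_sigma_algebraType (gen h) -> R).
Proof.
apply: (@measurability _ _ (g_sigma_algebraType (gen h)) R setT (h n)
   (@measurable_realfun.RGenInftyO.G R)).
  exact: measurable_realfun.RGenInftyO.measurableE.
move=> _ [_ [x ->] <-].
have -> : setT `&` h n @^-1` `]-oo, x[ = [set t | h n t < x].
  by apply/seteqP; split => t /=; rewrite in_itv /=; [case|].
exact: gen_lt.
Qed.

Lemma gen_preim d (X : measurableType d) (R : realType) (h : nat -> X -> R) n
  (B : set R) : measurable B -> <<s gen h >> (h n @^-1` B).
Proof.
move=> mB; have := @gen_mfun _ _ _ h n measurableT _ mB; by rewrite setTI.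
Qed.

Lemma gen_sub d (X : measurableType d) (R : realType) (h : nat -> X -> R) :
  (forall n, measurable_fun setT (h n)) -> <<s gen h >> `<=` measurable.
Proof.
move=> hm; apply: smallest_sub; first exact: sigma_algebra_measurable.
move=> _ [[n q] _ <-] /=.
have := hm n measurableT _ (measurable_itv `]-oo, ratr q[).
rewrite setTI; congr measurable; apply/seteqP; split => t /=; rewrite in_itv //=.
Qed.

Lemma gen_lim d (X : measurableType d) (R : realType) (h : nat -> X -> R)
  (g : X -> R) (s : nat -> nat) :
  (forall t, (fun k : nat => h (s k) t) @ \oo --> (g t : R)) ->
  forall B : set R, measurable B -> <<s gen h >> (g @^-1` B).
Proof.
move=> cv B mB.
have mg : measurable_fun [set: g_sigma_algebraType (gen h)] (g : g_sigma_algebraType (gen h) -> R).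
  apply: (@measurable_realfun.measurable_fun_cvg _ (g_sigma_algebraType (gen h)) R setT (fun k => h (s k)) g).
    by move=> k; exact: gen_mfun.
  by move=> t _; exact: cv.
by have := mg measurableT _ mB; rewrite setTI.
Qed.

Lemma dec_small d (X : measurableType d) (R : realType)
  (mu : {measure set X -> \bar R}) (F : nat -> set X) :
  (forall n, measurable (F n)) -> (forall n, F n.+1 `<=` F n) ->
  (mu (F 0%N) < +oo)%E -> \bigcap_n F n = set0 ->
  forall e : R, 0 < e -> exists N, (mu (F N) < e%:E)%E.
Proof.
move=> mF sF F0 capF e e0.
have ni : nonincreasing_seq F.
  apply/nonincreasing_seqP => n; apply/subsetPset; exact: sF.
have := nonincreasing_cvg_mu F0 mF _ ni.
rewrite capF measure0 => /(_ measurable0).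
move=> /fine_cvgP [fin cv].
have [N _ HN] := filterI fin (cvgr_lt (0:R) cv e e0).
exists N; have [+ +] := HN N (leqnn N) => /= fN.
by rewrite -lte_fin fineK.
Qed.

Fixpoint interp (I T : Type) (c : I -> set T) (t : GenTree.tree I) : set T :=
  match t with
  | GenTree.Leaf i => c i
  | GenTree.Node 0 [:: t1] => ~` interp c t1
  | GenTree.Node 1 [:: t1; t2] => interp c t1 `|` interp c t2
  | _ => set0
  end.

Lemma interp_G (I T : Type) (c : I -> set T) (G : set (set T)) :
  G set0 -> (forall A, G A -> G (~` A)) -> (forall A B, G A -> G B -> G (A `|` B)) ->
  (forall i, G (c i)) -> forall t, G (interp c t).
Proof.
move=> G0 GC GU Gc; fix IH 1; case => [i|n l]; first exact: Gc.
case: n => [|[|n]].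
- case: l => [|t1 [|t2 l]]; [exact: G0|exact: GC|exact: G0].
- case: l => [|t1 [|t2 [|t3 l]]]; [exact: G0|exact: G0|exact: GU|exact: G0].
- exact: G0.
Qed.

Definition sd T (A B : set T) := (A `\` B) `|` (B `\` A).

Lemma sd_sub_mu d (X : measurableType d) (R : realType)
  (mu : {measure set X -> \bar R}) (A B C : set X) :
  measurable A -> measurable B -> measurable C -> A `<=` B `|` C ->
  (mu A <= mu B + mu C)%E.
Proof.
move=> mA mB mC ABC; apply: le_trans (measureU2 mu mB mC).
by apply: le_measure => //; rewrite inE //; exact: measurableU.
Qed.

Lemma measurable_sd d (X : measurableType d) (A B : set X) :
  measurable A -> measurable B -> measurable (sd A B).
Proof. by move=> mA mB; apply: measurableU; apply: measurableD. Qed.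

Lemma sdC T (A B K : set T) :
  sd ((setT `\` A) `&` K) ((~` B) `&` K) = sd (A `&` K) (B `&` K).
Proof.
apply/seteqP; split => x; rewrite /sd /=;
  have := EM (A x); have := EM (B x); have := EM (K x); tauto.
Qed.

Lemma sdU T (A B F G K : set T) :
  sd ((A `|` B) `&` K) ((F `|` G) `&` K) `<=` sd (A `&` K) (F `&` K) `|` sd (B `&` K) (G `&` K).
Proof.
move=> x; rewrite /sd /=;
  have := EM (A x); have := EM (B x); have := EM (K x);
  have := EM (F x); have := EM (G x); tauto.
Qed.

Lemma sdS T (E U F K : set T) : U `<=` E ->
  sd (E `&` K) (F `&` K) `<=` ((E `&` K) `\` U) `|` sd (U `&` K) (F `&` K).
Proof.
move=> UE x; have := UE x; rewrite /sd /=;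
  have := EM (E x); have := EM (U x); have := EM (K x);
  have := EM (F x); tauto.
Qed.

Lemma sdK T (E F K : set T) :
  sd E (F `&` K) `<=` (E `\` K) `|` sd (E `&` K) (F `&` K).
Proof.
move=> x; rewrite /sd /=;
  have := EM (E x); have := EM (K x); have := EM (F x); tauto.
Qed.

Lemma sdxx T (A : set T) : sd A A = set0.
Proof. by rewrite /sd setDv setU0. Qed.

Lemma half_lt (R : realType) (a b : \bar R) (e : R) :
  (a < (e / 2)%:E)%E -> (b < (e / 2)%:E)%E -> (a + b < e%:E)%E.
Proof. by move=> ha hb; rewrite [e]splitr EFinD; exact: lteD. Qed.

Lemma approx_K d (X : measurableType d) (R : realType)
  (mu : {measure set X -> \bar R}) (I : Type) (c : I -> set X) (K : set X) :
  <<s range c >> `<=` measurable -> measurable K -> (mu K < +oo)%E ->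
  forall E, <<s range c >> E -> forall e : R, 0 < e ->
  exists t, (mu (sd (E `&` K) (interp c t `&` K)) < e%:E)%E.
Proof.
move=> Gm mK fK.
have mc i : measurable (c i).
  by apply: Gm; apply: sub_sigma_algebra; exists i.
have mI t : measurable (interp c t).
  apply: (@interp_G _ _ c (@measurable _ X)); [exact: measurable0|
    move=> A mA; exact: measurableC| move=> A B; exact: measurableU|exact: mc].
have fin A : measurable A -> (mu (A `&` K) < +oo)%E.
  move=> mA; apply: le_lt_trans fK; apply: le_measure; rewrite ?inE //.
  exact: measurableI.
pose L := [set E | measurable E /\ forall e : R, 0 < e ->
  exists t, (mu (sd (E `&` K) (interp c t `&` K)) < e%:E)%E].
suff : <<s range c >> `<=` L by move=> sub E /sub [].
apply: smallest_sub; last first.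
  move=> _ [i _ <-]; split; first exact: mc.
  by move=> e e0; exists (GenTree.Leaf i); rewrite /= sdxx measure0 lte_fin.
split.
- split; first exact: measurable0.
  by move=> e e0; exists (GenTree.Node 2 [::]); rewrite /= sdxx measure0 lte_fin.
- move=> A [mA hA]; split; first exact: measurableD.
  move=> e e0; have [t ht] := hA e e0; exists (GenTree.Node 0 [:: t]).
  by rewrite /= sdC.
- move=> A hA.
  have mA n : measurable (A n) by case: (hA n).
  have mbA : measurable (\bigcup_i A i) by exact: bigcupT_measurable.
  split; first exact: mbA.
  move=> e e0.
  pose U := fix U N := if N is N'.+1 then U N' `|` A N' else set0.
  have mU N : measurable (U N).
    by elim: N => [|N IH] /=; [exact: measurable0|exact: measurableU].
  have UA N : U N `<=` \bigcup_i A i.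
    elim: N => [|N IH] /=; first by [].
    by move=> x [/IH //|ANx]; exists N.
  have approxU N : forall e : R, 0 < e ->
      exists t, (mu (sd (U N `&` K) (interp c t `&` K)) < e%:E)%E.
    elim: N => [|N IH] e1 e10 /=.
      by exists (GenTree.Node 2 [::]); rewrite /= sdxx measure0 lte_fin.
    have e20 : 0 < e1 / 2 by rewrite divr_gt0.
    have [t1 h1] := IH _ e20; have [t2 h2] := (hA N).2 _ e20.
    exists (GenTree.Node 1 [:: t1; t2]) => /=.
    apply: le_lt_trans (half_lt h1 h2).
    apply: sd_sub_mu; last exact: sdU.
    + by apply: measurable_sd; apply: measurableI => //; apply: measurableU => //; exact: mI.
    + by apply: measurable_sd; apply: measurableI => //; exact: mI.
    + by apply: measurable_sd; apply: measurableI => //; exact: mI.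
  have e20 : 0 < e / 2 by rewrite divr_gt0.
  pose Fs N := ((\bigcup_i A i) `&` K) `\` U N.
  have [N hN] : exists N, (mu (Fs N) < (e / 2)%:E)%E.
    apply: dec_small => //.
    - by move=> N; apply: measurableD => //; exact: measurableI.
    - by move=> N x [Ax /= nU]; split => // UN; apply: nU; left.
    - have := fin _ mbA; apply: le_lt_trans; apply: le_measure; rewrite ?inE /Fs.
      + by apply: measurableD => //; exact: measurableI.
      + exact: measurableI.
      + by move=> x [].
    - apply/seteqP; split => // x /= hx.
      have [[[i _ Aix] Kx] _] := hx 0%N Logic.I.
      have [_ /=] := hx i.+1 Logic.I; apply.
      by right.
  have [t ht] := approxU N _ e20.
  exists t; apply: le_lt_trans (half_lt hN ht).
  apply: sd_sub_mu; last exact: sdS.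
    by apply: measurable_sd; apply: measurableI => //; exact: mI.
    by apply: measurableD => //; exact: measurableI.
  by apply: measurable_sd; apply: measurableI => //; exact: mI.
Qed.

Lemma sep_main d (X : measurableType d) (R : realType)
  (mu : {measure set X -> \bar R}) (I : countType) (c : I -> set X)
  (P : nat -> set X) :
  <<s range c >> `<=` measurable ->
  (forall j, <<s range c >> (P j)) -> (forall j, (mu (P j) < +oo)%E) ->
  meas_alg_separable mu [set E | <<s range c >> E /\ E `<=` \bigcup_j P j].
Proof.
move=> Gm GP fP.
set G := <<s range c >>.
have GU A B : G A -> G B -> G (A `|` B).
  exact: (@measurableU _ (g_sigma_algebraType (range c))).
have GI A B : G A -> G B -> G (A `&` B).
  exact: (@measurableI _ (g_sigma_algebraType (range c))).
have G0 : G set0 by exact: sigma_algebra0.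
have GC A : G A -> G (~` A).
  move=> GA; have [_ sC _] := @smallest_sigma_algebra _ setT (range c).
  by rewrite -setTD; exact: sC.
have Gint t : G (interp c t).
  by apply: interp_G => //; move=> i; apply: sub_sigma_algebra; exists i.
pose K := fix K m := if m is m'.+1 then K m' `|` P m' else set0.
have GK m : G (K m) by elim: m => [|m IH] //=; apply: GU => //; exact: GP.
have mK m : measurable (K m) by apply: Gm; apply: GK.
have fK m : (mu (K m) < +oo)%E.
  elim: m => [|m IH] /=; first by rewrite measure0.
  apply: le_lt_trans (measureU2 mu (mK m) (Gm _ (GP m))) _.
  exact: lte_add_pinfty IH (fP m).
have KP m : K m `<=` \bigcup_j P j.
  by elim: m => [|m IH] //= x [/IH //|Px]; exists m.
pose Sf := [set interp c p.1 `&` K p.2 | p in [set: GenTree.tree I * nat]].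
exists Sf; split.
  apply: (sub_countable (card_image_le _ _)); exact: countableP.
split.
  move=> _ [[t m] _ <-] /=; split; first split.
  - exact: GI.
  - by move=> x [_ /KP].
  - apply: le_lt_trans (fK m); apply: le_measure; rewrite ?inE //.
    by apply: Gm; exact: GI.
move=> E [GE EP] fE e e0.
have e20 : 0 < e / 2 by rewrite divr_gt0.
have mE : measurable E by apply: Gm.
have [m hm] : exists m, (mu (E `\` K m) < (e / 2)%:E)%E.
  apply: dec_small => //.
  - by move=> m; exact: measurableD.
  - by move=> m x [Ex nK]; split => // Kx; apply: nK; left.
  - by rewrite setD0.
  - apply/seteqP; split => // x /= hx.
    have [Ex _] := hx 0%N Logic.I.
    have [j _ Pjx] := EP x Ex.
    by have [_ /=] := hx j.+1 Logic.I; apply; right.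
have [t ht] := approx_K Gm (mK m) (fK m) GE e20.
exists (interp c t `&` K m); first by exists (t, m).
apply: le_lt_trans (half_lt hm ht).
have mI : measurable (interp c t) by apply: Gm; apply: Gint.
apply: sd_sub_mu; last exact: sdK.
    by apply: measurable_sd => //; exact: measurableI.
  exact: measurableD.
by apply: measurable_sd; exact: measurableI.
Qed.

Lemma ReMi (R : realType) (z : R[i]) : complex.Re ((- 'i%C) * z) = complex.Im z.
Proof. case: z => a b /=; lra. Qed.

Lemma normc_sq (R : realType) (z : R[i]) :
  Normc.normc z ^+ 2 = complex.Re z ^+ 2 + complex.Im z ^+ 2.
Proof. by case: z => a b /=; rewrite sqr_sqrtr // addr_ge0 // sqr_ge0. Qed.

Lemma dense_seq (R : realType) (H : lmodType R[i]) (hs : hilbert H) :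
  hseparable hs -> exists fs : nat -> H,
    forall x (e : R), 0 < e -> exists n, hnorm hs (x - fs n) < e.
Proof.
move=> [D [cD dD]].
have [fi fiI] := countable_injP _ cD.
exists (fun n => xget 0 [set y | D y /\ fi y = n]) => x e e0.
have [y Dy hy] := dD x e e0.
exists (fi y).
have ex : exists z, [set y0 | D y0 /\ fi y0 = fi y] z by exists y.
have [Dz fz] := xgetPex 0 ex.
by rewrite (fiI _ _ _ _ fz) ?inE.
Qed.

Lemma approx_lemma (R : realType) (H : lmodType R[i]) (hs : hilbert H)
  (T : Type) (phi : T -> H) (fs : nat -> H) :
  (forall x (e : R), 0 < e -> exists n, hnorm hs (x - fs n) < e) ->
  forall f, exists s : nat -> nat, forall t,
    (fun k => complex.Re (ip hs (fs (s k)) (phi t))) @ \oo --> (complex.Re (ip hs f (phi t)) : R).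
Proof.
move=> dens f.
have hk k : exists m, hnorm hs (f - fs m) < k.+1%:R^-1.
  by apply: dens; rewrite invr_gt0.
have [m mP] := choice hk.
exists m => t.
apply/cvgrPdist_lt => e e0.
set ny := hnorm hs (phi t).
have ny0 : 0 <= ny by exact: hnorm_ge0.
have e'0 : 0 < e / (ny + 1) by rewrite divr_gt0 // ltr_wpDl.
near=> k.
rewrite -raddfB /= -ipBl.
apply: le_lt_trans (ReCS hs _ _) _.
apply: (@le_lt_trans _ _ (k.+1%:R^-1 * (ny + 1))).
  apply: ler_pM; [exact: hnorm_ge0|exact: hnorm_ge0| exact: ltW (mP k)|].
  by rewrite lerDl.
rewrite -ltr_pdivlMr ?ltr_wpDl //.
by near: k; exact: (near_infty_natSinv_lt (PosNum e'0)).
Unshelve. all: by end_near.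
Qed.

Lemma cheb d (X : measurableType d) (R : realType) (mu : {measure set X -> \bar R})
  (F : X -> R) (A : set X) (c Bv : R) :
  measurable A -> 0 < c -> measurable_fun setT (EFin \o F) ->
  (forall t, 0 <= F t) -> (forall t, A t -> c <= F t) ->
  (\int[mu]_(t in setT) (F t)%:E <= Bv%:E)%E -> (mu A < +oo)%E.
Proof.
move=> mA c0 mF F0 cF IB.
have h1 : (c%:E * mu A <= Bv%:E)%E.
  rewrite -integral_cst //.
  apply: le_trans IB.
  have h2 : (\int[mu]_(t in A) (cst c%:E) t <= \int[mu]_(t in A) (F t)%:E)%E.
    apply: ge0_le_integral => //.
    - by move=> t _; rewrite /= lee_fin ltW.
    - exact: measurable_funS mF.
  apply: le_trans h2 _.
  apply: ge0_subset_integral => //.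
  by move=> t _; rewrite lee_fin.
move: h1; case E : (mu A) => [r| |] //.
  by rewrite ltry.
by rewrite gt0_muley ?lte_fin // leNgt ltry.
Qed.

Theorem corollary2p4 (R : realType) (H : lmodType R[i]) (hs : hilbert H)
  (Hcomplete : hcomplete hs) (Hsep : hseparable hs)
  (d : measure_display) (X : measurableType d) (mu : {measure set X -> \bar R})
  (phi : X -> H) (Hphi : cont_bessel hs mu setT measurable phi) :
  exists (X' : set X) (M' : set (set X)),
    sigma_finite_subset mu X' /\
    sigma_algebra X' M' /\
    M' `<=` [set E `&` X' | E in measurable] /\
    (forall t, ~ X' t -> phi t = 0) /\
    cont_bessel hs mu X' M' phi /\
    meas_alg_separable mu M'.
Proof.
move: Hphi => [Hm [B HB]].
have [fs dens] := dense_seq Hsep.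
pose ws n := if odd n then (- 'i%C) *: fs n./2 else fs n./2.
pose h n t := complex.Re (ip hs (ws n) (phi t)).
have mRe f : measurable_fun setT (fun t => complex.Re (ip hs f (phi t))).
  by move=> _ Y mY; exact: (Hm f Y mY).1.
have mIm f : measurable_fun setT (fun t => complex.Im (ip hs f (phi t))).
  by move=> _ Y mY; exact: (Hm f Y mY).2.
have hm n : measurable_fun setT (h n) by exact: mRe.
have Gm := gen_sub hm.
set G := <<s gen h >>.
have approx f : exists s : nat -> nat, forall t,
    (fun k => h (s k) t) @ \oo --> (complex.Re (ip hs f (phi t)) : R).
  have [m mP] := approx_lemma phi dens f.
  exists (fun k => (m k).*2) => t.
  rewrite /h /ws; under eq_fun do rewrite odd_double doubleK.
  exact: mP.
pose T0 := g_sigma_algebraType (gen h).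
pose P j : set X := match @choice.unpickle (nat * nat)%type j with
  | Some p => [set t | p.2.+1%:R^-1 < `|h p.1 t|]
  | None => set0 end.
have GP j : G (P j).
  rewrite /P; case: (choice.unpickle j) => [[n k]|]; last exact: sigma_algebra0.
  apply: (@gen_preim _ _ _ h n [set x : R | k.+1%:R^-1 < `|x|]).
  have := @measurable_realfun.normr_measurable R setT measurableT _ (measurable_itv `]k.+1%:R^-1, +oo[).
  rewrite setTI; congr measurable; apply/seteqP; split => x; rewrite /= in_itv /= andbT //.
have fP j : (mu (P j) < +oo)%E.
  have mP := Gm _ (GP j).
  move: mP; rewrite /P; case: (choice.unpickle j) => [[n k] mP|_]; last first.
    by rewrite measure0 ltry.
  apply: (@cheb _ _ _ mu (fun t => Normc.normc (ip hs (ws n) (phi t)) ^+ 2) _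
    (k.+1%:R^-1 ^+ 2) (B * hnorm hs (ws n) ^+ 2) mP).
  - by rewrite exprn_gt0 // invr_gt0.
  - apply/measurable_EFinP; under eq_fun do rewrite normc_sq.
    by apply: measurable_funD; apply: measurable_funX.
  - by move=> t; exact: sqr_ge0.
  - move=> t /= ht; rewrite normc_sq.
    move: ht; rewrite /h.
    set r := complex.Re _; set im := complex.Im _; set a := k.+1%:R^-1 => ht.
    have a0 : 0 < a by rewrite invr_gt0.
    have nr : `|r| ^+ 2 = r ^+ 2 by rewrite real_normK // num_real.
    have := sqr_ge0 im; nra.
  - exact: HB.
pose X' := \bigcup_j P j.
have GX' : G X' by exact: (@bigcupT_measurable _ T0).
have mX' : measurable X' by apply: Gm.
have mFint f : measurable_fun setT
    (fun t => ((Normc.normc (ip hs f (phi t))) ^+ 2)%:E).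
  apply/measurable_EFinP; under eq_fun do rewrite normc_sq.
  by apply: measurable_funD; apply: measurable_funX.
exists X', [set E | G E /\ E `<=` X'].
split.
  by exists P; split; [move=> j; apply: Gm; exact: GP|split; [exact: fP|]].
split.
  split.
  - by split; [exact: sigma_algebra0|].
  - move=> A [GA _]; split; last by move=> x [].
    exact: (@measurableD _ T0).
  - move=> A hA; split.
      by apply: (@bigcupT_measurable _ T0) => n; exact: (hA n).1.
    by move=> x [n _ /(hA n).2].
split.
  move=> E [GE EX]; exists E; first by apply: Gm.
  exact: setIidl.
split.
  move=> t nX.
  have h0 n : h n t = 0.
    have [//|hn] := eqVneq (h n t) 0; exfalso; apply: nX.
    have hpos : 0 < `|h n t| by rewrite normr_gt0.
    have [N _ HN] := near_infty_natSinv_lt (PosNum hpos).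
    have hN := HN N (leqnn N).
    exists (choice.pickle (n, N)); first exact: Logic.I.
    by rewrite /P choice.pickleK; exact: hN.
  have ip0 m : ip hs (fs m) (phi t) = 0.
    apply/eqP; rewrite eq_complex; apply/andP; split; apply/eqP.
      by have := h0 m.*2; rewrite /h /ws odd_double doubleK.
    have := h0 (m.*2.+1); rewrite /h /ws /= odd_double /= uphalf_double.
    by rewrite ipZl ReMi.
  set x := phi t.
  have [//|xn0] := eqVneq x 0; exfalso.
  have Nx0 : 0 < complex.Re (ip hs x x).
    rewrite lt_neqAle Reipxx_ge0 andbT eq_sym; apply/eqP => /Reipxx0 /eqP.
    by rewrite (negbTE xn0).
  have nx0 : 0 < hnorm hs x by rewrite /hnorm sqrtr_gt0.
  have [m hxm] := dens x _ nx0.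
  set y := fs m in hxm.
  have iyx : ip hs y x = 0 by exact: ip0.
  have ixy : ip hs x y = 0 by rewrite ip_conj iyx conjC0.
  have e1 : hnorm hs (x - y) ^+ 2 = hnorm hs x ^+ 2 + complex.Re (ip hs y y).
    rewrite !hnorm_sq ipBl !ipBr iyx ixy subr0 sub0r opprK raddfD //.
  have := Reipxx_ge0 hs y.
  have := hnorm_ge0 hs (x - y).
  nra.
have Re_case (f0 : H) (Bs : set R) (mBs : measurable Bs) :
    G (X' `&` ((fun t => complex.Re (ip hs f0 (phi t))) @^-1` Bs)).
  have [s cs] := approx f0.
  apply: (@measurableI _ T0) => //.
  exact: (gen_lim cs mBs).
split.
  split.
    move=> f Bs mBs; split; first by split; [exact: Re_case|move=> x []].
    have -> : (fun t => complex.Im (ip hs f (phi t))) =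
              (fun t => complex.Re (ip hs ((- 'i%C) *: f) (phi t))).
      by apply: funext => t; rewrite ipZl ReMi.
    by split; [exact: Re_case|move=> x []].
  exists B => f; apply: le_trans (HB f).
  apply: ge0_subset_integral => //.
  by move=> t _; rewrite lee_fin sqr_ge0.
exact: (sep_main Gm GP fP).
Qed.
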